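(* If $G$ is a special grid operator and $k\in\mathbb{Z}$, then $G'=\sigma^k G \sigma^k$ is a special grid operator and moreover $G'^\bullet = (-\tau)^k G^\bullet \tau^k$.
   Context: Let $\omega=e^{i\pi/4}$ and regard $\mathbb{Z}[\omega]$ as a subset of $\mathbb{R}^2\cong\mathbb{C}$. A grid operator is a real linear operator $G:\mathbb{R}^2\to\mathbb{R}^2$ with $G(\mathbb{Z}[\omega])\subseteq\mathbb{Z}[\omega]$; it is special if it has determinant $\pm 1$. The map $(-)^\bullet$ is $\sqrt2$-conjugation, the automorphism of $\mathbb{Z}[\omega]$ sending $a_0+a_1\omega+a_2\omega^2+a_3\omega^3$ to $a_0-a_1\omega+a_2\omega^2-a_3\omega^3$ (on $\mathbb{Q}(\sqrt2)$ it sends $a+b\sqrt2$ to $a-b\sqrt2$); for a matrix $G$, $G^\bullet$ is obtained by applying $(-)^\bullet$ to each entry. Let $\lambda=1+\sqrt2$ (so $\lambda^\bullet=-\lambda^{-1}$). The shift operators are \[ \sigma = \sqrt{\lambda^{-1}}\begin{bmatrix}\lambda & 0\\ 0 & 1\end{bmatrix},\qquad \tau = \sqrt{\lambda^{-1}}\begin{bmatrix}1 & 0\\ 0 & -\lambda\end{bmatrix}. \] *)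

(* Defs.v *)
From HB Require Import structures.
From mathcomp Require Import all_boot all_order all_algebra.
From mathcomp Require Import boolp classical_sets reals.
Set Implicit Arguments. Unset Strict Implicit. Unset Printing Implicit Defensive.
Import Order.TTheory GRing.Theory Num.Theory.
Local Open Scope ring_scope.

Section Defs.
Variable R : realType.

Definition sqrt2 : R := Num.sqrt 2.

(* omega = e^{i pi/4}; R^2 ~ C via (x, y) <-> x + i y, column vectors. *)
(* The point a0 + a1 w + a2 w^2 + a3 w^3 of Z[w] as a vector of R^2:
   w = (1+i)/sqrt2, w^2 = i, w^3 = (-1+i)/sqrt2. *)
Definition omega_pt (a0 a1 a2 a3 : int) : 'cV[R]_2 :=
  \col_(i < 2) (if i == 0 then a0%:~R + (a1%:~R - a3%:~R) / sqrt2
                else a2%:~R + (a1%:~R + a3%:~R) / sqrt2).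

Definition in_Zomega (v : 'cV[R]_2) : Prop :=
  exists a0 a1 a2 a3 : int, v = omega_pt a0 a1 a2 a3.

Definition grid_op (G : 'M[R]_2) : Prop :=
  forall v, in_Zomega v -> in_Zomega (G *m v).

Definition special_grid_op (G : 'M[R]_2) : Prop :=
  grid_op G /\ (\det G = 1 \/ \det G = -1).

(* sqrt2-conjugation on Q(sqrt2): a + b sqrt2 |-> a - b sqrt2 (a, b rational).
   Outside Q(sqrt2) it is (arbitrarily) the identity. *)
Definition sqrt2conj (x : R) : R :=
  let p := xget (0, 0) [set p : rat * rat | x = ratr p.1 + ratr p.2 * sqrt2] in
  if x == ratr p.1 + ratr p.2 * sqrt2 then ratr p.1 - ratr p.2 * sqrt2 else x.

Definition bullet (G : 'M[R]_2) : 'M[R]_2 := map_mx sqrt2conj G.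

Definition mx2 (a b c d : R) : 'M[R]_2 :=
  \matrix_(i < 2, j < 2)
    (if i == 0 then (if j == 0 then a else b) else (if j == 0 then c else d)).

Definition lambda : R := 1 + sqrt2.

Definition sigma : 'M[R]_2 := Num.sqrt (lambda^-1) *: mx2 lambda 0 0 1.
Definition tau : 'M[R]_2 := Num.sqrt (lambda^-1) *: mx2 1 0 0 (- lambda).

End Defs.

(* Main.v *)
Require Import Defs.
From HB Require Import structures.
From mathcomp Require Import all_boot all_order all_algebra.
From mathcomp Require Import boolp classical_sets reals.
From mathcomp Require Import ring lra zify.
Import Order.TTheory GRing.Theory Num.Theory.
Local Open Scope ring_scope.

Lemma nat_sq2 {n d : nat} : coprime n d -> (n * n = 2 * d * d)%N -> False.
Proof.
move=> cop E.
have hn : ~~ odd n.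
  by move: (congr1 odd E); rewrite oddM andbb -mulnA mul2n odd_double => ->.
have En : n = (n./2).*2 by rewrite -[n in LHS]odd_double_half (negbTE hn).
have hd : ~~ odd d.
  have E2 : (d * d = 2 * (n./2 * n./2))%N by move: E; rewrite En -mul2n; set m := n./2; nia.
  by move: (congr1 odd E2); rewrite oddM andbb mul2n odd_double => ->.
have : (2 %| gcdn n d)%N by rewrite dvdn_gcd !dvdn2 hn hd.
by rewrite (eqP cop).
Qed.

Lemma rat_sq2 (q : rat) : q * q != 2.
Proof.
apply/eqP => E.
have d0 : (denq q)%:~R != 0 :> rat by rewrite intr_eq0 denq_neq0.
have E' : ((numq q)%:~R / (denq q)%:~R) * ((numq q)%:~R / (denq q)%:~R) = 2 :> rat
  by rewrite divq_num_den.
have E1 : ((numq q * numq q)%:~R : rat) = (2 * denq q * denq q)%:~R.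
  rewrite !rmorphM /= (_ : 2%:~R = 2 :> rat) // -E'; field; exact: d0.
have E2 := intr_inj E1.
have E3 := congr1 absz E2.
rewrite !abszM /= in E3.
apply: (nat_sq2 (coprime_num_den q)); lia.
Qed.

Section Aux.
Variable R : realType.
Local Notation s := (sqrt2 R).
Local Notation lam := (lambda R).
Local Notation mx2 := (@mx2 R).
Local Notation omega_pt := (@omega_pt R).

Lemma s_gt0 : 0 < s.
Proof. by rewrite /sqrt2 sqrtr_gt0 ltr0n. Qed.

Lemma s_neq0 : s != 0.
Proof. by rewrite gt_eqF // s_gt0. Qed.

Lemma ss : s * s = 2.
Proof. by rewrite -expr2 /sqrt2 sqr_sqrtr // ler0n. Qed.

Lemma sV : s^-1 = s / 2.
Proof.
apply: (@mulfI _ s); first exact: s_neq0.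
by rewrite mulfV ?s_neq0 // mulrA ss mulfV // pnatr_eq0.
Qed.

Lemma lam_gt0 : 0 < lam.
Proof. rewrite /lambda; have := s_gt0; lra. Qed.

Lemma lam_neq0 : lam != 0.
Proof. by rewrite gt_eqF // lam_gt0. Qed.

Lemma lamV : lam^-1 = s - 1.
Proof.
apply: (@mulfI _ lam); first exact: lam_neq0.
rewrite mulfV ?lam_neq0 // /lambda.
have := ss; lra.
Qed.

Definition r := Num.sqrt (lam^-1).

Lemma rr : r * r = lam^-1.
Proof. by rewrite -expr2 /r sqr_sqrtr // invr_ge0 ltW // lam_gt0. Qed.

Lemma r_neq0 : r != 0.
Proof. by rewrite /r gt_eqF // sqrtr_gt0 invr_gt0 lam_gt0. Qed.

Ltac mcase := apply/matrixP => -[[|[|?]] ?] -[[|[|?]] ?]; rewrite ?mxE //=.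

Lemma mx2E (G : 'M[R]_2) : G = mx2 (G 0 0) (G 0 1) (G 1 0) (G 1 1).
Proof. by mcase; congr (G _ _); apply: val_inj. Qed.

Lemma mx2M a b c d e f g h :
  mx2 a b c d * mx2 e f g h =
  mx2 (a * e + b * g) (a * f + b * h) (c * e + d * g) (c * f + d * h).
Proof. by rewrite -mulmxE; mcase; rewrite !big_ord_recl big_ord0 !mxE /= addr0. Qed.

Lemma mx2Z k a b c d : k *: mx2 a b c d = mx2 (k * a) (k * b) (k * c) (k * d).
Proof. by mcase. Qed.

Lemma mx2N a b c d : - mx2 a b c d = mx2 (- a) (- b) (- c) (- d).
Proof. by mcase. Qed.

Lemma mx2_1 : 1 = mx2 1 0 0 1 :> 'M[R]_2.
Proof. by mcase. Qed.

Lemma mx2_map (f : R -> R) a b c d :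
  map_mx f (mx2 a b c d) = mx2 (f a) (f b) (f c) (f d).
Proof. by mcase. Qed.

Lemma mx2_congr a b c d a' b' c' d' :
  a = a' -> b = b' -> c = c' -> d = d' -> mx2 a b c d = mx2 a' b' c' d'.
Proof. by move=> -> -> -> ->. Qed.

Lemma det_mx2 a b c d : \det (mx2 a b c d) = a * d - b * c.
Proof.
rewrite (expand_det_row _ 0) !big_ord_recl big_ord0 /cofactor !det_mx11 !mxE /bump /=.
by rewrite expr0 expr1 mul1r mulN1r addr0 mulrN.
Qed.

Lemma sigmaE : sigma R = mx2 (r * lam) 0 0 r.
Proof. by rewrite /sigma mx2Z mulr0 mulr1. Qed.

Lemma tauE : tau R = mx2 r 0 0 (- (r * lam)).
Proof. by rewrite /tau mx2Z mulr0 mulr1 mulrN. Qed.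

Ltac fld := field; rewrite ?lam_neq0 ?r_neq0 ?s_neq0 ?pnatr_eq0 //=.

Lemma inv_eq (A B : 'M[R]_2) : A * B = 1 -> B * A = 1 -> A^-1 = B.
Proof.
move=> AB BA; have uA : A \is a GRing.unit by apply/unitrP; exists B.
by rewrite -[RHS](mulKr uA) AB mulr1.
Qed.

Definition sigmai := mx2 (r^-1 * lam^-1) 0 0 r^-1.
Definition taui := mx2 r^-1 0 0 (- (r^-1 * lam^-1)).

Lemma sigmaV : (sigma R)^-1 = sigmai.
Proof.
have := r_neq0; have := lam_neq0 => l0 r0.
by apply: inv_eq; rewrite sigmaE mx2M mx2_1; apply: mx2_congr; fld.
Qed.

Lemma tauV : (tau R)^-1 = taui.
Proof.
have := r_neq0; have := lam_neq0 => l0 r0.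
by apply: inv_eq; rewrite tauE mx2M mx2_1; apply: mx2_congr; fld.
Qed.

Lemma NtauV : (- tau R)^-1 = - taui.
Proof. by rewrite invrN tauV. Qed.


Lemma ssx x : s * s * x = 2 * x.
Proof. by rewrite ss. Qed.

Lemma grid_mul (A B : 'M[R]_2) : grid_op A -> grid_op B -> grid_op (A * B).
Proof. by move=> hA hB v hv; rewrite -mulmxE -mulmxA; apply/hA/hB. Qed.

Ltac gridt a0 a1 a2 a3 :=
  mcase; rewrite !big_ord_recl big_ord0 !mxE /= ?intrD ?intrB ?lamV /lambda sV;
  have := ssx a0%:~R; have := ssx a1%:~R; have := ssx a2%:~R; have := ssx a3%:~R;
  lra.

Lemma grid_D1 : grid_op (mx2 lam 0 0 1).
Proof. move=> v [a0 [a1 [a2 [a3 ->]]]]; exists (a0+a1-a3), (a1+a0), a2, (a3-a0); gridt a0 a1 a2 a3. Qed.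

Lemma grid_D1i : grid_op (mx2 lam^-1 0 0 1).
Proof. move=> v [a0 [a1 [a2 [a3 ->]]]]; exists (a1-a3-a0), (a0+a3), a2, (a1-a0); gridt a0 a1 a2 a3. Qed.

Lemma grid_D2 : grid_op (mx2 1 0 0 lam).
Proof. move=> v [a0 [a1 [a2 [a3 ->]]]]; exists a0, (a1+a2), (a2+a1+a3), (a3+a2); gridt a0 a1 a2 a3. Qed.

Lemma grid_D2i : grid_op (mx2 1 0 0 lam^-1).
Proof. move=> v [a0 [a1 [a2 [a3 ->]]]]; exists a0, (a2-a3), (a1+a3-a2), (a2-a1); gridt a0 a1 a2 a3. Qed.

Lemma scal3 (k : R) (A X : 'M[R]_2) : (k *: A) * X * (k *: A) = (k * k) *: (A * X * A).
Proof. by rewrite -scalerAl -scalerAl -scalerAr scalerA. Qed.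

Lemma sGs (G : 'M[R]_2) : sigma R * G * sigma R =
  mx2 (lam * G 0 0) (G 0 1) (G 1 0) (lam^-1 * G 1 1).
Proof.
rewrite (_ : sigma R = r *: mx2 lam 0 0 1) // scal3 rr [G in LHS]mx2E !mx2M mx2Z.
by apply: mx2_congr; fld.
Qed.

Lemma sGsV (G : 'M[R]_2) : (sigma R)^-1 * G * (sigma R)^-1 =
  mx2 (lam^-1 * G 0 0) (G 0 1) (G 1 0) (lam * G 1 1).
Proof.
rewrite sigmaV (_ : sigmai = r^-1 *: mx2 lam^-1 0 0 1); last first.
  by rewrite mx2Z mulr0 mulr1.
rewrite scal3 -invfM rr invrK [G in LHS]mx2E !mx2M mx2Z.
by apply: mx2_congr; fld.
Qed.

Lemma DGD (G : 'M[R]_2) : mx2 lam 0 0 1 * G * mx2 1 0 0 lam^-1 =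
  mx2 (lam * G 0 0) (G 0 1) (G 1 0) (lam^-1 * G 1 1).
Proof. by rewrite [G in LHS]mx2E !mx2M; apply: mx2_congr; fld. Qed.

Lemma DGDV (G : 'M[R]_2) : mx2 lam^-1 0 0 1 * G * mx2 1 0 0 lam =
  mx2 (lam^-1 * G 0 0) (G 0 1) (G 1 0) (lam * G 1 1).
Proof. by rewrite [G in LHS]mx2E !mx2M; apply: mx2_congr; fld. Qed.

Lemma tXt a b c d : (- tau R) * mx2 a b c d * tau R =
  mx2 (- lam^-1 * a) b c (- lam * d).
Proof.
rewrite !mulNr (_ : tau R = r *: mx2 1 0 0 (- lam)) // scal3 rr !mx2M mx2Z mx2N.
by apply: mx2_congr; fld.
Qed.

Lemma tXtV a b c d : (- tau R)^-1 * mx2 a b c d * (tau R)^-1 =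
  mx2 (- lam * a) b c (- lam^-1 * d).
Proof.
rewrite NtauV tauV !mulNr (_ : taui = r^-1 *: mx2 1 0 0 (- lam^-1)); last first.
  by rewrite mx2Z mulr0 mulr1 mulrN.
rewrite scal3 -invfM rr invrK !mx2M mx2Z mx2N.
by apply: mx2_congr; fld.
Qed.

Definition Q2 (x : R) := exists a b : rat, x = ratr a + ratr b * s.

Lemma Q2_uniq a b c d : ratr a + ratr b * s = ratr c + ratr d * s -> a = c /\ b = d.
Proof.
move=> E.
have [bd|nbd] := eqVneq b d.
  subst d; split=> //; apply: (fmorph_inj (@ratr R)); move: E; lra.
exfalso.
have hD : ratr d - ratr b != 0 :> R by rewrite -rmorphB fmorph_eq0 subr_eq0 eq_sym.
set q := (a - c) / (d - b).
have hs : s = ratr q.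
  rewrite /q fmorph_div !rmorphB /=; apply: (canRL (mulfK hD)); move: E; lra.
have : ratr (q * q) = ratr 2 :> R by rewrite rmorphM /= -hs ss rmorph_nat.
by move/(fmorph_inj (@ratr R))/eqP; rewrite (negbTE (rat_sq2 q)).
Qed.

Lemma conjE a b : sqrt2conj (ratr a + ratr b * s) = ratr a - ratr b * s.
Proof.
rewrite /sqrt2conj /=.
set p := xget _ _.
have Hp : ratr a + ratr b * s = ratr p.1 + ratr p.2 * s.
  exact: (@xgetPex _ (0, 0) (fun q : rat * rat => ratr a + ratr b * s = ratr q.1 + ratr q.2 * s) (ex_intro _ (a, b) erefl)).
have [ea eb] := Q2_uniq _ _ _ _ Hp.
by rewrite -Hp eqxx -ea -eb.
Qed.

Lemma conj_lam x : Q2 x -> sqrt2conj (lam * x) = - lam^-1 * sqrt2conj x.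
Proof.
move=> [a [b ->]].
have -> : lam * (ratr a + ratr b * s) = ratr (a + 2 * b) + ratr (a + b) * s.
  rewrite !rmorphD rmorphM rmorph_nat /lambda; have := ssx (ratr b); have := ssx (ratr a); lra.
rewrite !conjE lamV !rmorphD rmorphM rmorph_nat.
have := ssx (ratr b); have := ssx (ratr a); lra.
Qed.

Lemma conj_lamV x : Q2 x -> sqrt2conj (lam^-1 * x) = - lam * sqrt2conj x.
Proof.
move=> [a [b ->]].
have -> : lam^-1 * (ratr a + ratr b * s) = ratr (2 * b - a) + ratr (a - b) * s.
  rewrite lamV rmorphB rmorphM rmorph_nat rmorphB; have := ssx (ratr b); have := ssx (ratr a); lra.
rewrite !conjE /lambda rmorphB rmorphM rmorph_nat rmorphB.
have := ssx (ratr b); have := ssx (ratr a); lra.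
Qed.

Lemma Q2_pt a0 a1 a2 a3 :
  Q2 ((omega_pt a0 a1 a2 a3) 0 0) /\ Q2 ((omega_pt a0 a1 a2 a3) 1 0).
Proof.
rewrite !mxE /=; split.
  exists a0%:~R, ((a1 - a3)%:~R / 2).
  rewrite fmorph_div /= !rmorph_int rmorph_nat intrB sV; lra.
exists a2%:~R, ((a1 + a3)%:~R / 2).
rewrite fmorph_div /= !rmorph_int rmorph_nat intrD sV; lra.
Qed.

Lemma col_e1 (G : 'M[R]_2) i : (G *m omega_pt 1 0 0 0) i 0 = G i 0.
Proof.
rewrite !mxE !big_ord_recl big_ord0 !mxE /= (_ : 1%:~R = 1 :> R) // (_ : 0%:~R = 0 :> R) //.
lra.
Qed.

Lemma col_e2 (G : 'M[R]_2) i : (G *m omega_pt 0 0 1 0) i 0 = G i 1.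
Proof.
rewrite !mxE !big_ord_recl big_ord0 !mxE /= (_ : 1%:~R = 1 :> R) // (_ : 0%:~R = 0 :> R) //.
have -> : lift ord0 ord0 = 1 :> 'I_2 by apply: val_inj.
lra.
Qed.

Lemma grid_Q2 (G : 'M[R]_2) : grid_op G ->
  [/\ Q2 (G 0 0), Q2 (G 0 1), Q2 (G 1 0) & Q2 (G 1 1)].
Proof.
move=> hG.
have [b0 [b1 [b2 [b3 E1]]]] := hG _ (ex_intro _ 1 (ex_intro _ 0 (ex_intro _ 0 (ex_intro _ 0 erefl)))).
have [c0 [c1 [c2 [c3 E2]]]] := hG _ (ex_intro _ 0 (ex_intro _ 0 (ex_intro _ 1 (ex_intro _ 0 erefl)))).
rewrite -(col_e1 G 0) -(col_e1 G 1) -(col_e2 G 0) -(col_e2 G 1) E1 E2.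
by have [? ?] := Q2_pt b0 b1 b2 b3; have [? ?] := Q2_pt c0 c1 c2 c3.
Qed.

Lemma det_eq (G : 'M[R]_2) x y : x * y = 1 ->
  \det (mx2 x 0 0 1 * G * mx2 1 0 0 y) = \det G.
Proof.
move=> xy; rewrite -!mulmxE !det_mulmx !det_mx2 !mulr0 !subr0 mulr1 mul1r.
by rewrite mulrC mulrA (mulrC y) xy mul1r.
Qed.

Lemma base_pos (G : 'M[R]_2) : special_grid_op G ->
  special_grid_op (sigma R * G * sigma R) /\
  bullet (sigma R * G * sigma R) = (- tau R) * bullet G * tau R.
Proof.
move=> [hg hd]; have [q00 q01 q10 q11] := grid_Q2 G hg.
split.
  rewrite sGs -DGD; split.
    by apply: grid_mul; [apply: grid_mul|]; [exact: grid_D1|exact: hg|exact: grid_D2i].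
  by rewrite det_eq // mulfV // lam_neq0.
rewrite sGs /bullet mx2_map [G in RHS]mx2E mx2_map tXt.
by apply: mx2_congr; rewrite ?conj_lam ?conj_lamV.
Qed.

Lemma base_neg (G : 'M[R]_2) : special_grid_op G ->
  special_grid_op ((sigma R)^-1 * G * (sigma R)^-1) /\
  bullet ((sigma R)^-1 * G * (sigma R)^-1) = (- tau R)^-1 * bullet G * (tau R)^-1.
Proof.
move=> [hg hd]; have [q00 q01 q10 q11] := grid_Q2 G hg.
split.
  rewrite sGsV -DGDV; split.
    by apply: grid_mul; [apply: grid_mul|]; [exact: grid_D1i|exact: hg|exact: grid_D2].
  by rewrite det_eq // mulVf // lam_neq0.
rewrite sGsV /bullet mx2_map [G in RHS]mx2E mx2_map tXtV.
by apply: mx2_congr; rewrite ?conj_lam ?conj_lamV.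
Qed.

Lemma pow_ind (A B C : 'M[R]_2) :
  (forall G, special_grid_op G ->
     special_grid_op (A * G * A) /\ bullet (A * G * A) = B * bullet G * C) ->
  forall n G, special_grid_op G ->
  special_grid_op (A ^+ n * G * A ^+ n) /\
  bullet (A ^+ n * G * A ^+ n) = B ^+ n * bullet G * C ^+ n.
Proof.
move=> h; elim=> [|n IH] G hG; first by rewrite !expr0 !mul1r !mulr1.
have [h1 h2] := IH G hG; have [h3 h4] := h _ h1.
have e : A ^+ n.+1 * G * A ^+ n.+1 = A * (A ^+ n * G * A ^+ n) * A.
  by rewrite {1}exprS exprSr !mulrA.
have e2 : B ^+ n.+1 * bullet G * C ^+ n.+1 = B * (B ^+ n * bullet G * C ^+ n) * C.
  by rewrite {1}exprS exprSr !mulrA.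
by rewrite e e2 -h2; split.
Qed.

End Aux.

Theorem lemma5p42 (R : realType) (G : 'M[R]_2) (k : int) :
  special_grid_op G ->
  special_grid_op ((sigma R) ^ k * G * (sigma R) ^ k) /\
  bullet ((sigma R) ^ k * G * (sigma R) ^ k) =
    (- tau R) ^ k * bullet G * (tau R) ^ k.
Proof.
move=> hG; case: k => n.
  by rewrite -!exprnP; apply: pow_ind => //; apply: base_pos.
have e : forall x : 'M[R]_2, x ^ (Negz n) = (x^-1) ^+ n.+1 by move=> x; rewrite exprVn.
by rewrite !e; apply: pow_ind => //; apply: base_neg.
Qed.
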